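(* Let $n\ge3$ and let $\overrightarrow{C_n}$ be $\Theta$-oriented. For a distance set $D\subseteq\{0,1,\dots,n-2\}$ of $\overrightarrow{C_n}$, $\overrightarrow{C_n}$ is $D$-antimagic if and only if $\min(D)\le1$.
   Context: An oriented graph is a simple graph each of whose edges is given one direction (an arc $(u,v)$ goes from $u$ to $v$). For vertices $u,v$, $d(u,v)$ is the length of a shortest directed path from $u$ to $v$ ($d(u,u)=0$, $\infty$ if no path). A distance set of an oriented graph is a nonempty set $D$ of nonnegative integers each of which is a finite distance $d(u,v)$ for some pair of vertices. $N_D(v)=\{y : d(v,y)\in D\}$; for a bijection $f:V\to\{1,\dots,|V|\}$, $\omega_D(v)=\sum_{x\in N_D(v)}f(x)$ (empty sum $0$); $f$ is $D$-antimagic if distinct vertices have distinct $D$-weights, and the graph is $D$-antimagic if such an $f$ exists. A $\Theta$-oriented cycle $\overrightarrow{C_n}$ is an orientation of the $n$-cycle with exactly one source (in-degree $0$) and exactly one sink (out-degree $0$), which are adjacent; up to relabeling, its vertices are $v_1,\dots,v_n$ and its arcs are $(v_i,v_{i+1})$, $1\le i\le n-1$, and $(v_1,v_n)$. Its diameter is $n-2$. *)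

(* Defs.v *)
From mathcomp Require Import all_boot.
Set Implicit Arguments. Unset Strict Implicit. Unset Printing Implicit Defensive.

Section Oriented.
Variable T : finType.
Variable arc : rel T.

Fixpoint walk (k : nat) (u v : T) : bool :=
  match k with
  | 0 => u == v
  | k'.+1 => [exists w, arc u w && walk k' w v]
  end.

Definition dist_is (u v : T) (k : nat) : bool :=
  walk k u v && [forall j : 'I_k, ~~ walk j u v].

Definition distance_set (D : pred nat) : Prop :=
  (exists k, D k) /\ forall k, D k -> exists u v, dist_is u v k.

Definition ND (D : pred nat) (v : T) : {set T} :=
  [set y | [exists k : 'I_#|T|.+1, D k && dist_is v y k]].

Definition labeling (f : T -> nat) : Prop :=
  injective f /\ forall x, 1 <= f x <= #|T|.

Definition Dweight (D : pred nat) (f : T -> nat) (v : T) : nat :=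
  \sum_(x in ND D v) f x.

Definition D_antimagic_labeling (D : pred nat) (f : T -> nat) : Prop :=
  labeling f /\ injective (Dweight D f).

Definition D_antimagic (D : pred nat) : Prop :=
  exists f, D_antimagic_labeling D f.
End Oriented.

(* Theta-oriented cycle on vertices v_1..v_n represented as 0..n-1:
   arcs (v_i, v_{i+1}) for 1 <= i <= n-1, and (v_1, v_n). *)
Definition theta_arc (n : nat) : rel 'I_n :=
  fun u v => (val v == (val u).+1) || ((val u == 0) && (val v == n.-1)).
Arguments theta_arc n : clear implicits.

Definition natset (m : nat) (D : {set 'I_m}) : pred nat :=
  fun k => [exists i in D, val i == k].

(* Main.v *)
Require Import Defs.
From mathcomp Require Import all_boot.
From mathcomp Require Import zify.

Set Implicit Arguments. Unset Strict Implicit. Unset Printing Implicit Defensive.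

Ltac slia := simpl in *; lia.

Section S.
Variable n : nat.
Hypothesis Hn : 3 <= n.

Lemma walkE k (u v : 'I_n) :
  walk (theta_arc n) k u v = (val v == u + k) || [&& val u == 0, val v == n.-1 & k == 1].
Proof.
elim: k u => [|k IH] u /=.
  by rewrite addn0 !andbF orbF eq_sym.
have hu := ltn_ord u; have hv := ltn_ord v.
apply/existsP/idP.
  case=> w /andP[]; rewrite /theta_arc IH; have hw := ltn_ord w; slia.
move=> H.
have [Hs|Hs] := boolP (u.+1 < n).
  case/orP: H => H.
    exists (Ordinal Hs); rewrite /theta_arc IH /=; slia.
  have H1 : n.-1 < n by slia.
  exists (Ordinal H1); rewrite /theta_arc IH /=; slia.
have H1 : n.-1 < n by slia.
exists (Ordinal H1); rewrite /theta_arc IH /=; slia.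
Qed.

Lemma dist_walk (u v : 'I_n) k : dist_is (theta_arc n) u v k -> walk (theta_arc n) k u v.
Proof. by case/andP. Qed.

Variable D : pred nat.

Lemma memND (v y : 'I_n) :
  (y \in ND (theta_arc n) D v) = [exists k : 'I_n.+1, D k && dist_is (theta_arc n) v y k].
Proof. by rewrite inE card_ord. Qed.

Lemma memND_intro (v y : 'I_n) k : D k -> dist_is (theta_arc n) v y k ->
  y \in ND (theta_arc n) D v.
Proof.
move=> Dk H; rewrite memND.
have hk : k < n.+1.
  have := dist_walk H; rewrite walkE; have := ltn_ord y; slia.
by apply/existsP; exists (Ordinal hk); rewrite /= Dk H.
Qed.

Definition g (y : 'I_n) : 'I_n := Ordinal (leq_ltn_trans (leq_pred y) (ltn_ord y)).

Lemma shift (i j y : 'I_n) : val j = i.+1 -> y \in ND (theta_arc n) D j ->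
  (1 <= val y) /\ g y \in ND (theta_arc n) D i.
Proof.
move=> Hj; rewrite memND => /existsP[k /andP[Dk Hd]].
have W := dist_walk Hd; rewrite walkE Hj in W.
have hy := ltn_ord y.
split; first slia.
apply: (memND_intro Dk); apply/andP; split.
  rewrite walkE /=; slia.
apply/forallP => l; rewrite walkE /=; have := ltn_ord l; slia.
Qed.

Definition f (v : 'I_n) := n - val v.

Lemma nonempty (i : 'I_n) m : i.+1 < n -> m <= 1 -> D m ->
  exists y, y \in ND (theta_arc n) D i.
Proof.
move=> hi hm Dm.
have hy : i + m < n by slia.
exists (Ordinal hy); apply: (memND_intro Dm); apply/andP; split.
  rewrite walkE /=; slia.
apply/forallP => l; rewrite walkE /=; have := ltn_ord l; slia.
Qed.

Lemma step m (i j : 'I_n) : m <= 1 -> D m -> val j = i.+1 ->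
  Dweight (theta_arc n) D f j < Dweight (theta_arc n) D f i.
Proof.
move=> hm Dm Hj.
rewrite /Dweight.
set A := ND _ D j; set B := ND _ D i.
have inj : {in A &, injective g}.
  move=> x y /(shift Hj) [hx _] /(shift Hj) [hy _] /(congr1 val) /= E.
  apply: val_inj; slia.
have sub : [set g x | x in A] \subset B.
  apply/subsetP => z /imsetP [x /(shift Hj) [_ Hx] ->]; exact Hx.
have H1 : \sum_(x in A) f x + #|A| <= \sum_(x in B) f x.
  rewrite [X in _ <= X](big_setID [set g x | x in A]) /= (setIidPr sub) (big_imset _ inj) /=.
  rewrite -sum1_card -big_split /=.
  apply: leq_trans (leq_addr _ _).
  apply: leq_sum => x /(shift Hj) [hx _]; rewrite /f /=; have := ltn_ord x; slia.
have H2 : \sum_(x in A) f x <= #|A| * n.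
  rewrite -sum_nat_const; apply: leq_sum => x _; rewrite /f; slia.
have hi : i.+1 < n by have := ltn_ord j; slia.
have [y Hy] := nonempty hi hm Dm.
have H3 : 1 <= \sum_(x in B) f x.
  rewrite (bigD1 y) //= /f; have := ltn_ord y; slia.
case: (posnP #|A|) => hA.
  rewrite hA mul0n in H2; slia.
slia.
Qed.

Lemma decr m (i j : 'I_n) : m <= 1 -> D m -> i < j ->
  Dweight (theta_arc n) D f j < Dweight (theta_arc n) D f i.
Proof.
move=> hm Dm hij.
have : exists d, val j = i + d.+1 by exists (j - i.+1); slia.
case=> d; elim: d j {hij} => [|d IH] j Hj.
  apply: (step hm Dm); slia.
have hk : i + d.+1 < n by have := ltn_ord j; slia.
apply: ltn_trans (IH (Ordinal hk) erefl).
apply: (step hm Dm) => /=; slia.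
Qed.

End S.

Theorem mainTheorem8 (n : nat) (D : {set 'I_(n.-1)}) :
  3 <= n ->
  distance_set (theta_arc n) (natset D) ->
  (D_antimagic (theta_arc n) (natset D)
   <-> exists2 k : 'I_(n.-1), k \in D & val k <= 1).
Proof.
move=> Hn _; split.
  case=> F [_ Finj].
  case: (boolP [exists k in D, val k <= 1]).
    by case/existsP => k /andP[kD hk]; exists k.
  move=> /negP Hno; exfalso.
  have ge2 : forall k, natset D k -> 2 <= k.
    move=> k /existsP[i /andP[iD /eqP ik]].
    case: (leqP 2 k) => // hk; exfalso; apply: Hno.
    by apply/existsP; exists i; rewrite iD ik; slia.
  have ha : n.-1 < n by slia.
  have hb : n.-2 < n by slia.
  have E : forall v : 'I_n, n.-2 <= v -> Dweight (theta_arc n) (natset D) F v = 0.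
    move=> v hv; rewrite /Dweight big_pred0 //.
    move=> y; apply/negP; rewrite memND => /existsP[k /andP[Dk Hd]].
    have := ge2 _ Dk; have W := dist_walk Hd; rewrite (walkE Hn) in W.
    have := ltn_ord y; have := ltn_ord v; slia.
  have : Ordinal ha = Ordinal hb.
    apply: Finj; rewrite !E //=; slia.
  move/(congr1 val) => /=; slia.
case=> k kD hk.
have Dk : natset D k by apply/existsP; exists k; rewrite kD eqxx.
exists (@f n); split.
  split.
    move=> x y /= E; apply: val_inj; rewrite /f in E.
    have := ltn_ord x; have := ltn_ord y; slia.
  move=> x; rewrite card_ord /f; have := ltn_ord x; slia.
move=> a b E.
case: (ltngtP a b) => h.
- by have := decr Hn hk Dk h; rewrite E ltnn.
- by have := decr Hn hk Dk h; rewrite E ltnn.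
- exact: val_inj.
Qed.
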